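(* For every $m\ge2$, no vertex of the unweighted subdivided star $G(m)$ is sedentary.
   Context: $G(m)$ is obtained from the star $K_{1,m}$ by subdividing each edge once: it has a central vertex of degree $m$ joined to $m$ vertices of degree two, each of which is adjacent to one further leaf (so $G(m)$ has $2m+1$ vertices). For a graph with adjacency matrix $A$, $U(t)=e^{itA}$; a vertex $u$ is sedentary if $\inf_{t>0}|U(t)_{u,u}|\ge C$ for some constant $0<C\le1$, and not sedentary if this infimum is $0$. *)

(* Defs.v *)
From HB Require Import structures.
From mathcomp Require Import all_boot all_order all_algebra.
From mathcomp Require Import all_classical all_reals all_analysis.
Set Implicit Arguments. Unset Strict Implicit. Unset Printing Implicit Defensive.
Import Order.TTheory GRing.Theory Num.Theory.
Import numFieldNormedType.Exports.
Local Open Scope ring_scope.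

(* The subdivided star G(m) on vertex set 'I_(2m+1):
   vertex 0 is the centre, vertices 1..m are the degree-two vertices,
   vertex i (1 <= i <= m) is adjacent to 0 and to the leaf i+m. *)
Definition gm_arc (m : nat) (i j : nat) : bool :=
  ((i == 0%N) && (1 <= j <= m)%N) || ((1 <= i <= m)%N && (j == i + m)%N).

Definition gm_edge (m : nat) (i j : 'I_((2 * m).+1)) : bool :=
  gm_arc m i j || gm_arc m j i.

Definition adjG (R : realType) (m : nat) : 'M[R]_((2 * m).+1) :=
  \matrix_(i, j) (gm_edge i j)%:R.

(* U(t) = e^{itA} = cos(tA) + i sin(tA) for a real matrix A, with
   cos(tA) = sum_k (-1)^k t^(2k) A^(2k) / (2k)!  and
   sin(tA) = sum_k (-1)^k t^(2k+1) A^(2k+1) / (2k+1)!  (entrywise series; the series converge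
   absolutely, and limn denotes the limit of the partial sums). *)
Definition cosM (R : realType) (n : nat) (A : 'M[R]_n.+1) (t : R)
  : 'M[R]_n.+1 :=
  \matrix_(i, j) limn (([series
      ((-1) ^+ k * t ^+ (2 * k) / ((2 * k)`!)%:R * (A ^+ (2 * k)) i j)]_k : R ^nat)).

Definition sinM (R : realType) (n : nat) (A : 'M[R]_n.+1) (t : R)
  : 'M[R]_n.+1 :=
  \matrix_(i, j) limn (([series
      ((-1) ^+ k * t ^+ (2 * k).+1 / ((2 * k).+1`!)%:R
         * (A ^+ (2 * k).+1) i j)]_k : R ^nat)).

Definition absU (R : realType) (n : nat) (A : 'M[R]_n.+1) (t : R)
  (u v : 'I_n.+1) : R :=
  Num.sqrt ((cosM A t u v) ^+ 2 + (sinM A t u v) ^+ 2).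

Definition sedentary (R : realType) (n : nat) (A : 'M[R]_n.+1)
  (u : 'I_n.+1) : Prop :=
  exists C : R, 0 < C <= 1 /\ forall t : R, 0 < t -> C <= absU A t u u.

(* Main.v *)
Require Import Defs.
From HB Require Import structures.
From mathcomp Require Import all_boot all_order all_algebra.
From mathcomp Require Import all_classical all_reals all_analysis.
From mathcomp Require Import zify ring lra.
Import Order.TTheory GRing.Theory Num.Theory.
Import numFieldNormedType.Exports.
Local Open Scope ring_scope.
Section Comb.
Variable R : realType.
Variable m : nat.

Definition NS (F : nat -> R) (i : nat) : R :=
  if i == 0%N then \sum_(1 <= j < m.+1) F j
  else if (i <= m)%N then F 0%N + F (i + m)%N else F (i - m)%N.

Lemma pick_nat (a b k : nat) (P : nat -> bool) (F : nat -> R) :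
  (a <= k < b)%N -> (forall j, (a <= j < b)%N -> P j = (j == k)) ->
  \sum_(a <= j < b) (P j)%:R * F j = F k.
Proof.
move=> /andP[ak kb] hP.
rewrite (@big_cat_nat _ _ _ k) ?(ltnW kb) //=.
rewrite [X in _ + X](@big_cat_nat _ _ _ k.+1) //= big_nat1.
rewrite hP ?ak ?kb // eqxx mul1r.
rewrite big_nat_cond big1 ?add0r; last first.
  move=> j /andP[/andP[aj jk] _]; rewrite hP; last by lia.
  by rewrite (_ : (j == k) = false) ?mul0r //; lia.
rewrite big_nat_cond big1 ?addr0 // => j /andP[/andP[kj jb] _]; rewrite hP; last by lia.
by rewrite (_ : (j == k) = false) ?mul0r //; lia.
Qed.

Lemma step_lemma (n : nat) (i u : 'I_((2 * m).+1)) (G : nat -> R) :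
 (forall j : 'I_((2 * m).+1), (adjG R m ^+ n) j u = G (j : nat)) ->
 (adjG R m ^+ n.+1) i u = NS G i.
Proof.
move=> hG; rewrite exprS -mulmxE mxE.
under eq_bigr => j _ do rewrite hG mxE /gm_edge.
rewrite -(big_mkord xpredT (fun j => (gm_arc m i j || gm_arc m j i)%:R * G j)).
case: i => i /= ilt; rewrite /NS.
case: eqP => [->|i0].
  rewrite (@big_cat_nat _ _ _ 1) //= ?big_nat1.
  rewrite [X in _ + X](@big_cat_nat _ _ _ m.+1) //=; last by lia.
  rewrite mul0r add0r.
  have -> : \sum_(m.+1 <= i0 < (2 * m).+1) (gm_arc m 0 i0 || gm_arc m i0 0)%:R * G i0 = 0.
    rewrite big_nat_cond big1 // => j /andP[/andP[h1 h2] _].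
    by rewrite (_ : (gm_arc m 0 j || gm_arc m j 0) = false) ?mul0r //; rewrite /gm_arc; lia.
  rewrite addr0; apply: eq_big_nat => j hj.
  by rewrite (_ : (gm_arc m 0 j || gm_arc m j 0) = true) ?mul1r //; rewrite /gm_arc; lia.
case: ifP => him.
  rewrite (@big_cat_nat _ _ _ 1) //= ?big_nat1.
  rewrite (_ : (gm_arc m i 0 || gm_arc m 0 i) = true); last by rewrite /gm_arc; lia.
  rewrite mul1r; congr (_ + _); apply: pick_nat; first by lia.
  by move=> j hj; rewrite /gm_arc; lia.
by apply: pick_nat; [lia | move=> j hj; rewrite /gm_arc; lia].
Qed.

Lemma column_lemma (u : 'I_((2 * m).+1)) (Ge Go : nat -> nat -> R) :
  (forall j : 'I_((2 * m).+1), Ge 0%N j = (j == u)%:R) ->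
  (forall k (i : 'I_((2 * m).+1)), Go k i = NS (Ge k) i) ->
  (forall k (i : 'I_((2 * m).+1)), Ge k.+1 i = NS (Go k) i) ->
  forall k (j : 'I_((2 * m).+1)),
    (adjG R m ^+ (2 * k)) j u = Ge k j /\ (adjG R m ^+ (2 * k).+1) j u = Go k j.
Proof.
move=> h0 h1 h2; elim=> [|k IH] j.
  have e0 : forall j : 'I_((2 * m).+1), (adjG R m ^+ (2 * 0)) j u = Ge 0%N j.
    by move=> i; rewrite muln0 expr0 mxE h0.
  by split; [exact: e0 | rewrite (@step_lemma _ j u _ e0) h1].
have e1 : forall j : 'I_((2 * m).+1), (adjG R m ^+ (2 * k).+1) j u = Go k j.
  by move=> i; case: (IH i).
have e2 : forall j : 'I_((2 * m).+1), (adjG R m ^+ (2 * k.+1)) j u = Ge k.+1 j.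
  by move=> i; rewrite mulnS add2n (@step_lemma _ i u _ e1) h2.
by split; [exact: e2 | rewrite (@step_lemma _ j u _ e2) h1].
Qed.

Lemma sum_const (y : R) : \sum_(1 <= j < m.+1) y = m%:R * y.
Proof. by rewrite sumr_const_nat subn1 /= mulr_natl. Qed.

Lemma sum_if (a : nat) (x y : R) : (1 <= a <= m)%N ->
  \sum_(1 <= j < m.+1) (if j == a then x else y) = x + (m%:R - 1) * y.
Proof.
move=> ha.
rewrite (@big_cat_nat _ _ _ a) //=; last by lia.
rewrite [X in _ + X](@big_cat_nat _ _ _ a.+1) //=; last by lia.
rewrite big_nat1 eqxx.
rewrite (@eq_big_nat _ _ _ 1 a _ (fun=> y)); last by move=> j hj; case: eqP => //; lia.
rewrite (@eq_big_nat _ _ _ a.+1 m.+1 _ (fun=> y)); last by move=> j hj; case: eqP => //; lia.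
rewrite !sumr_const_nat.
have -> : (m%:R - 1 : R) = (a - 1)%:R + (m.+1 - a.+1)%:R.
  rewrite -natrD -(@natrB _ m 1); last by lia.
  congr (_%:R); lia.
  by rewrite mulrDl !mulr_natl addrCA.
by case/andP: ha.
Qed.


Hypothesis hm : (0 < m)%N.
Let P : R := (m.+1)%:R.
Let pk (k : nat) : R := P ^+ k.
Definition zz (k : nat) : R := (k == 0%N)%:R.
Lemma zzS k : zz k.+1 = 0. Proof. by []. Qed.
Let Pn0 : P != 0. Proof. by rewrite /P pnatr_eq0. Qed.
Let mn0 : (m%:R : R) != 0. Proof. by rewrite pnatr_eq0 -lt0n. Qed.
Let pkS k : pk k.+1 = P * pk k. Proof. by rewrite /pk exprS. Qed.
Let PE : P = m%:R + 1. Proof. by rewrite /P -addn1 natrD. Qed.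

Let P1 : (1 + m%:R : R) != 0. Proof. by rewrite addrC natr1 pnatr_eq0. Qed.
Let P1' : (m%:R + 1 : R) != 0. Proof. by rewrite natr1 pnatr_eq0. Qed.
Ltac fld := field; rewrite ?andbT ?mn0 ?Pn0 ?P1 ?P1' ?mulf_neq0 //.
Ltac ifs := repeat (rewrite /=; case: ifP => ?; try (exfalso; lia)).

Definition Gec k j : R := if j == 0%N then m%:R / P * pk k + zz k / P
  else if (j <= m)%N then 0 else pk k / P - zz k / P.
Definition Goc k j : R := if j == 0%N then 0 else if (j <= m)%N then pk k else 0.

Lemma center_col k (j : 'I_((2 * m).+1)) :
  (adjG R m ^+ (2 * k)) j ord0 = Gec k j /\ (adjG R m ^+ (2 * k).+1) j ord0 = Goc k j.
Proof.
apply: column_lemma => {k j}.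
- move=> j; have -> : (j == ord0) = (j == 0%N :> nat) by []. rewrite /Gec /zz /pk expr0 /=. case: ifP => h.
    by rewrite /=; fld.
  by ifs; rewrite ?subrr.
- move=> k [i /= hi]; rewrite /NS /Goc /Gec; case: eqP => [i0|i0].
    by rewrite big_nat_cond big1 // => j /andP[hj _]; ifs.
  ifs; last by [].
  by fld.
- move=> k [i /= hi]; rewrite /NS /Goc /Gec zzS; case: eqP => [i0|i0].
    rewrite (@eq_big_nat _ _ _ 1 m.+1 _ (fun=> pk k)); last by move=> j hj; ifs.
    by rewrite sum_const pkS; fld.
  ifs; first by rewrite addr0.
  by rewrite pkS; fld.
Qed.

Definition Qm k : R := (pk k + (m%:R - 1)) / m%:R.
Definition Q'm k : R := (pk k - 1) / m%:R.
Definition Gem (a : nat) k j : R := if j == 0%N then 0 else if j == a then Qm k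
  else if (j <= m)%N then Q'm k else 0.
Definition Gom (a : nat) k j : R := if j == 0%N then pk k else if (j <= m)%N then 0
  else if j == (a + m)%N then Qm k else Q'm k.

Lemma middle_col (u : 'I_((2 * m).+1)) k (j : 'I_((2 * m).+1)) : (1 <= u <= m)%N ->
  (adjG R m ^+ (2 * k)) j u = Gem u k j /\ (adjG R m ^+ (2 * k).+1) j u = Gom u k j.
Proof.
move=> hu; apply: column_lemma => {k j}.
- move=> j; rewrite /Gem /Qm /pk expr0 /=.
  rewrite -val_eqE /= (_ : forall b : bool, (b%:R : R) = if b then 1 else 0); last by case.
  by ifs; rewrite /Q'm ?expr0 ?subrr ?mul0r //; fld.
- move=> k [i /= hi]; rewrite /NS /Gom /Gem; case: eqP => [i0|i0].
    rewrite (@eq_big_nat _ _ _ 1 m.+1 _ (fun j => if j == u then Qm k else Q'm k)); last first.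
      by move=> j hj; ifs.
    by rewrite sum_if // /Qm /Q'm; fld.
  by ifs; rewrite ?add0r.
- move=> k [i /= hi]; rewrite /NS /Gom /Gem; case: eqP => [i0|i0].
    by rewrite big_nat_cond big1 // => j /andP[hj _]; ifs.
  by ifs; rewrite /Qm /Q'm ?pkS ?addr0 //; fld.
Qed.

Definition Xl k : R := pk k / (m%:R * P) + (m%:R - 1) / m%:R + zz k / P.
Definition Yl k : R := pk k / P - zz k / P.
Definition Zl k : R := pk k / (m%:R * P) - 1 / m%:R + zz k / P.
Definition Gel (a : nat) k j : R := if j == 0%N then Yl k else if (j <= m)%N then 0
  else if j == (a + m)%N then Xl k else Zl k.
Definition Gol (a : nat) k j : R := if j == 0%N then 0 else if (j <= m)%N then
  (if j == a then Xl k + Yl k else Yl k + Zl k) else 0.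

Lemma leaf_col (a : nat) (u : 'I_((2 * m).+1)) k (j : 'I_((2 * m).+1)) :
  (1 <= a <= m)%N -> (u : nat) = (a + m)%N ->
  (adjG R m ^+ (2 * k)) j u = Gel a k j /\ (adjG R m ^+ (2 * k).+1) j u = Gol a k j.
Proof.
move=> ha hu; apply: column_lemma => {k j}.
- move=> j; rewrite /Gel /Xl /Yl /Zl /zz /pk expr0 /=.
  rewrite -val_eqE /= (_ : forall b : bool, (b%:R : R) = if b then 1 else 0); last by case.
  rewrite hu.
  by ifs; fld.
- move=> k [i /= hi]; rewrite /NS /Gol /Gel; case: eqP => [i0|i0].
    by rewrite big_nat_cond big1 // => j /andP[hj _]; ifs.
  by ifs; rewrite ?add0r // addrC.
- move=> k [i /= hi]; rewrite /NS /Gol /Gel; case: eqP => [i0|i0].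
    rewrite (@eq_big_nat _ _ _ 1 m.+1 _ (fun j => if j == a then Xl k + Yl k else Yl k + Zl k)); last first.
      by move=> j hj; ifs.
    by rewrite sum_if // /Xl /Yl /Zl !zzS pkS; fld.
  by ifs; rewrite /Xl /Yl /Zl ?zzS ?pkS ?addr0 //; fld.
Qed.

End Comb.

Local Open Scope classical_set_scope.
Local Open Scope ring_scope.
Section Ser.
Variable R : realType.

Lemma series_zz : series (zz R) @ \oo --> (1 : R).
Proof.
apply: cvg_near_cst; exists 1%N => // n /= hn.
rewrite /series /= (@big_cat_nat _ _ _ 1) //= big_nat1 /zz /= big_nat_cond big1 ?addr0 //.
by move=> k /andP[/andP[h1 _] _]; case: k h1.
Qed.

Lemma cos_diag (n : nat) (A : 'M[R]_n.+1) (u : 'I_n.+1) (c1 c2 c3 mu : R) : 0 <= mu ->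
  (forall k, (A ^+ (2 * k)) u u = c1 * mu ^+ k + c2 + c3 * zz R k) ->
  forall t, cosM A t u u = c1 * cos (Num.sqrt mu * t) + c2 * cos t + c3.
Proof.
move=> mu0 hA t; rewrite /cosM mxE.
apply: (cvg_lim (@Rhausdorff R)).
have -> : ([series (-1) ^+ k * t ^+ (2 * k) / ((2 * k)`!)%:R * (A ^+ (2 * k)) u u]_k : R^nat)
   = (fun n => c1 * series (cos_coeff' (Num.sqrt mu * t)) n + c2 * series (cos_coeff' t) n
        + c3 * series (zz R) n).
  apply/funext => N; rewrite /series /= !big_distrr -!big_split /=.
  apply: eq_bigr => k _; rewrite hA /cos_coeff' -mul2n exprMn [Num.sqrt mu ^+ _]exprM sqr_sqrtr //. rewrite -!exprnP.
  case: k => [|k]; rewrite /zz /= ?muln0 ?fact0 ?expr0.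
  - by rewrite invr1; ring.
  - move: ((-1) ^+ k.+1) (t ^+ (2 * k.+1)) (mu ^+ k.+1) ((2 * k.+1)`!%:R : R) => a b c d; ring.
apply: cvgD; first apply: cvgD.
- apply: cvgMl_tmp; exact: cvg_cos_coeff'.
- apply: cvgMl_tmp; exact: cvg_cos_coeff'.
- have h := cvgMl_tmp (a := c3) series_zz; rewrite mulr1 in h; exact: h.
Qed.

Lemma sin_diag (n : nat) (A : 'M[R]_n.+1) (u : 'I_n.+1) :
  (forall k, (A ^+ (2 * k).+1) u u = 0) -> forall t, sinM A t u u = 0.
Proof.
move=> hA t; rewrite /sinM mxE.
apply: (cvg_lim (@Rhausdorff R)).
have -> : ([series (-1) ^+ k * t ^+ (2 * k).+1 / ((2 * k).+1`!)%:R * (A ^+ (2 * k).+1) u u]_k : R^nat)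
   = (fun=> 0).
  apply/funext => N; rewrite /series /= big1 // => k _.
  by rewrite hA mulr0.
exact: cvg_cst.
Qed.

Lemma zero_exists (c1 c2 c3 s T : R) : c1 + c2 + c3 = 1 -> 0 < T ->
  c1 * cos (s * T) + c2 * cos T + c3 <= 0 ->
  exists t, 0 < t /\ c1 * cos (s * t) + c2 * cos t + c3 = 0.
Proof.
move=> hs T0 hT.
set f := fun t => c1 * cos (s * t) + c2 * cos t + c3.
have f0 : f 0 = 1 by rewrite /f mulr0 cos0 !mulr1.
have cf : continuous f.
  move=> x; apply: cvgD; last exact: cvg_cst.
  apply: cvgD; apply: cvgMl_tmp; last exact: continuous_cos.
  apply: (@continuous_comp _ _ _ ( *%R s) cos).
    by apply: cvgMl_tmp; exact: cvg_id.
  exact: continuous_cos.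
have hc : {within `[0, T], continuous f} by exact: continuous_subspaceT.
have hmm : Num.min (f 0) (f T) <= 0 <= Num.max (f 0) (f T).
  by rewrite ge_min le_max f0 hT ler01 orbT.
have [c] := IVT (ltW T0) hc hmm.
rewrite in_itv /= => /andP[c0 cT] fc.
exists c; split => //.
rewrite lt_neqAle c0 andbT; apply/eqP => c0'.
by move: fc; rewrite -c0' f0 => /eqP; rewrite oner_eq0.
Qed.
End Ser.

Lemma nonpos_div (R : realType) (x y : R) : x <= 0 -> 0 < y -> x / y <= 0.
Proof. by move=> hx hy; rewrite mulr_le0_ge0 // invr_ge0 ltW. Qed.

Theorem corollary19 (R : realType) (m : nat) :
  (2 <= m)%N -> forall u : 'I_((2 * m).+1), ~ sedentary (adjG R m) u.
Proof.
move=> hm2 u [C [/andP[C0 C1] hC]].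
have hm : (0 < m)%N by lia.
suff [t [t0 [hc hs]]] : exists t, 0 < t /\ cosM (adjG R m) t u u = 0 /\ sinM (adjG R m) t u u = 0.
  have := hC t t0; rewrite /absU hc hs expr2 mulr0 addr0 sqrtr0 => h.
  by have := lt_le_trans C0 h; rewrite ltxx.
have mn0 : (m%:R : R) != 0 by rewrite pnatr_eq0 -lt0n.
have mgt0 : (0 : R) < m%:R by rewrite ltr0n.
have Pgt0 : (0 : R) < (m.+1)%:R by rewrite ltr0n.
have Pn0 : ((m.+1)%:R : R) != 0 by rewrite pnatr_eq0.
have P1 : (1 + m%:R : R) != 0 by rewrite addrC natr1 pnatr_eq0.
have sP : 0 < Num.sqrt ((m.+1)%:R : R) by rewrite sqrtr_gt0.
case: (eqVneq (u : nat) 0%N) => [u0|u0].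
  have -> : u = ord0 by apply/val_inj.
  have hd k : (adjG R m ^+ (2 * k)) ord0 ord0 =
      (m%:R / (m.+1)%:R) * (m.+1)%:R ^+ k + 0 + (1 / (m.+1)%:R) * zz R k.
    have [-> _] := @center_col R m hm k ord0; rewrite /Gec /=.
    by move: (_ ^+ k) (zz R k) => x y; field.
  have ho k : (adjG R m ^+ (2 * k).+1) ord0 ord0 = 0.
    by have [_ ->] := @center_col R m hm k ord0.
  have e1 : m%:R / (m.+1)%:R + 0 + 1 / (m.+1)%:R = 1 :> R by field.
  have e2 : 0 < pi / Num.sqrt ((m.+1)%:R : R) by rewrite divr_gt0 // pi_gt0.
  have e3 : m%:R / (m.+1)%:R * cos (Num.sqrt (m.+1)%:R * (pi / Num.sqrt (m.+1)%:R))
      + 0 * cos (pi / Num.sqrt (m.+1)%:R) + 1 / (m.+1)%:R <= 0 :> R.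
    rewrite mulrCA divff ?gt_eqF // mulr1 cospi mul0r addr0.
    have -> : m%:R / (m.+1)%:R * -1 + 1 / (m.+1)%:R = (1 - m%:R) / (m.+1)%:R :> R by field.
    by rewrite nonpos_div // subr_le0 ler1n.
  have [t [t0 ht]] := @zero_exists R _ _ _ _ _ e1 e2 e3.
  exists t; split => //; split; last exact: (@sin_diag R).
  by rewrite (@cos_diag R _ _ _ _ _ _ _ (ltW Pgt0) hd).

have uP := ltn_ord u.
case: (leqP (u : nat) m) => hum.
  have hu : (1 <= u <= m)%N by lia.
  have hd k : (adjG R m ^+ (2 * k)) u u =
      (1 / m%:R) * (m.+1)%:R ^+ k + (m%:R - 1) / m%:R + 0 * zz R k.
    have [-> _] := @middle_col R m hm u k u hu.
    rewrite /Gem (negbTE u0) eqxx /Qm.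
    by move: (_ ^+ k) (zz R k) => x y; field.
  have ho k : (adjG R m ^+ (2 * k).+1) u u = 0.
    have [_ ->] := @middle_col R m hm u k u hu.
    by rewrite /Gom (negbTE u0) hum.
  have e1 : 1 / m%:R + (m%:R - 1) / m%:R + 0 = 1 :> R by field.
  have e3 : 1 / m%:R * cos (Num.sqrt (m.+1)%:R * pi)
      + (m%:R - 1) / m%:R * cos pi + 0 <= 0 :> R.
    have h1 : 1 / m%:R * cos (Num.sqrt (m.+1)%:R * pi) <= 1 / m%:R :> R.
      by rewrite ler_piMr ?cos_le1 // divr_ge0 // ltW.
    have h2 : 1 / m%:R + (m%:R - 1) / m%:R * -1 <= 0 :> R.
      have -> : 1 / m%:R + (m%:R - 1) / m%:R * -1 = (2 - m%:R) / m%:R :> R by field.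
      by rewrite nonpos_div // subr_le0 (ler_nat R 2 m).
    rewrite cospi addr0; apply: le_trans h2; by rewrite lerD2r.
  have [t [t0 ht]] := @zero_exists R _ _ _ _ _ e1 (ltac:(exact: pi_gt0) : (0 : R) < pi) e3.
  exists t; split => //; split; last exact: (@sin_diag R).
  by rewrite (@cos_diag R _ _ _ _ _ _ _ (ltW Pgt0) hd).
set a := (u - m)%N.
have ha : (1 <= a <= m)%N by rewrite /a; lia.
have hu : (u : nat) = (a + m)%N by rewrite /a; lia.
have hd k : (adjG R m ^+ (2 * k)) u u =
    (1 / (m%:R * (m.+1)%:R)) * (m.+1)%:R ^+ k + (m%:R - 1) / m%:R + 1 / (m.+1)%:R * zz R k.
  have [-> _] := @leaf_col R m hm a u k u ha hu.
  rewrite /Gel hu.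
  have -> : (a + m == 0)%N = false by lia.
  have -> : (a + m <= m)%N = false by lia.
  rewrite eqxx /Xl.
  by move: (_ ^+ k) (zz R k) => x y; field; rewrite P1 mn0.
have ho k : (adjG R m ^+ (2 * k).+1) u u = 0.
  have [_ ->] := @leaf_col R m hm a u k u ha hu.
  rewrite /Gol hu.
  have -> : (a + m == 0)%N = false by lia.
  by have -> : (a + m <= m)%N = false by lia.
have e1 : 1 / (m%:R * (m.+1)%:R) + (m%:R - 1) / m%:R + 1 / (m.+1)%:R = 1 :> R by field; rewrite ?P1 ?mn0.
have e3 : 1 / (m%:R * (m.+1)%:R) * cos (Num.sqrt (m.+1)%:R * pi)
    + (m%:R - 1) / m%:R * cos pi + 1 / (m.+1)%:R <= 0 :> R.
  have h1 : 1 / (m%:R * (m.+1)%:R) * cos (Num.sqrt (m.+1)%:R * pi) <= 1 / (m%:R * (m.+1)%:R) :> R.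
    by rewrite ler_piMr ?cos_le1 // divr_ge0 // mulr_ge0 // ltW.
  have h2 : 1 / (m%:R * (m.+1)%:R) + (m%:R - 1) / m%:R * -1 + 1 / (m.+1)%:R <= 0 :> R.
    have -> : 1 / (m%:R * (m.+1)%:R) + (m%:R - 1) / m%:R * -1 + 1 / (m.+1)%:R
       = (2 + m%:R - m%:R ^+ 2) / (m%:R * (m.+1)%:R) :> R.
      by rewrite -natr1; field; rewrite natr1 pnatr_eq0 mn0.
    rewrite nonpos_div ?mulr_gt0 //.
    have : (2 : R) <= m%:R by rewrite (ler_nat R 2 m).
    move: (m%:R : R) => x hx; nra.
  rewrite cospi; apply: le_trans h2; by rewrite !lerD2r.
have [t [t0 ht]] := @zero_exists R _ _ _ _ _ e1 (ltac:(exact: pi_gt0) : (0 : R) < pi) e3.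
exists t; split => //; split; last exact: (@sin_diag R).
by rewrite (@cos_diag R _ _ _ _ _ _ _ (ltW Pgt0) hd).
Qed.
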